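(* Let $H=1$ and assume the MDP satisfies the low-rank assumption with parameter $d$ (i.e. $r_1$ has rank at most $\lfloor d/2\rfloor$). In the infinite-sample setting (the values $r_1(s,a)$ are known for $(s,a)\in\operatorname{supp}(d^{\pi^\beta})$), let $\widehat Q$ be a minimizer of $\|M\|_{\max}$ over $M\in\mathbb R^{S\times A}$ subject to $\mathbb 1_{d^{\pi^\beta}}\circ M=\mathbb 1_{d^{\pi^\beta}}\circ r_1$ and $\|M\|_\infty\le1$, and let $\widehat J=\sum_{s,a}\mu_1(s)\pi^\theta_1(a\mid s)\widehat Q(s,a)$. Then \[ \big|\widehat J - J^{\pi^\theta}\big|\le2\sqrt{dSA}\,\operatorname{Dis}\big(d^{\pi^\beta},d^{\pi^\theta}\big). \]
   Context: Contextual bandit: finite state (context) set $\mathcal S$, $S=|\mathcal S|$, finite action set $\mathcal A$, $A=|\mathcal A|$, reward $r_1:\mathcal S\times\mathcal A\to[0,1]$, context distribution $\mu_1$. For a policy $\pi_1:\mathcal S\to\Delta(\mathcal A)$, $d^\pi(s,a)=\mu_1(s)\pi_1(a\mid s)$ and $J^\pi=\sum_{s,a}d^\pi(s,a)r_1(s,a)$; $\pi^\theta$ is the target and $\pi^\beta$ the behavior policy. Functions on $\mathcal S\times\mathcal A$ are viewed as $S\times A$ matrices. $\|M\|_{\max}=\min_{U,V:\,M=UV^\top}\|U\|_{2\to\infty}\|V\|_{2\to\infty}$ ($\|\cdot\|_{2\to\infty}$ maximum row Euclidean norm), $\|M\|_\infty=\max|M_{ij}|$, $\mathbb 1_M$ support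 indicator, $\circ$ entrywise product, $\|\cdot\|_{\mathrm{op}}$ spectral norm. Operator discrepancy: $\operatorname{Dis}(p,q)=\min\{\|g-q\|_{\mathrm{op}}:g\in\Delta(\mathcal S\times\mathcal A),\ \operatorname{supp}(g)\subseteq\operatorname{supp}(p)\}$. *)

(* Defs.v *)
From HB Require Import structures.
From mathcomp Require Import all_boot all_order all_algebra.
From mathcomp Require Import boolp classical_sets reals.
Set Implicit Arguments. Unset Strict Implicit. Unset Printing Implicit Defensive.
Import Order.TTheory GRing.Theory Num.Theory.
Local Open Scope ring_scope.
Local Open Scope classical_set_scope.

Section Defs.
Variable R : realType.

Definition row_norm2 m k (U : 'M[R]_(m, k)) (i : 'I_m) : R :=
  Num.sqrt (\sum_(j < k) U i j ^+ 2).

Definition norm_2inf m k (U : 'M[R]_(m, k)) : R :=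
  \big[Num.max/0]_(i < m) row_norm2 U i.

Definition maxnorm m n (M : 'M[R]_(m, n)) : R :=
  inf [set x : R | exists (k : nat) (U : 'M[R]_(m, k)) (V : 'M[R]_(n, k)),
        M = U *m V^T /\ x = norm_2inf U * norm_2inf V].

Definition supnorm m n (M : 'M[R]_(m, n)) : R :=
  \big[Num.max/0]_(i < m) \big[Num.max/0]_(j < n) `|M i j|.

Definition opnorm m n (M : 'M[R]_(m, n)) : R :=
  sup [set x : R | exists (u : 'I_m -> R) (v : 'I_n -> R),
        \sum_i u i ^+ 2 <= 1 /\ \sum_j v j ^+ 2 <= 1 /\
        x = \sum_i \sum_j u i * M i j * v j].

Definition is_distr m n (g : 'M[R]_(m, n)) : Prop :=
  (forall i j, 0 <= g i j) /\ \sum_i \sum_j g i j = 1.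

Definition Dis m n (p q : 'M[R]_(m, n)) : R :=
  inf [set x : R | exists g : 'M[R]_(m, n),
        is_distr g /\ (forall i j, p i j = 0 -> g i j = 0) /\
        x = opnorm (g - q)].

Definition occ m n (mu : 'I_m -> R) (pi : 'I_m -> 'I_n -> R) : 'M[R]_(m, n) :=
  \matrix_(s, a) (mu s * pi s a).

Definition supp_ind m n (M : 'M[R]_(m, n)) : 'M[R]_(m, n) :=
  \matrix_(i, j) (if M i j != 0 then 1 else 0).

Definition hadamard m n (M N : 'M[R]_(m, n)) : 'M[R]_(m, n) :=
  \matrix_(i, j) (M i j * N i j).

Definition value m n (mu : 'I_m -> R) (pi : 'I_m -> 'I_n -> R)
  (Q : 'M[R]_(m, n)) : R :=
  \sum_s \sum_a mu s * pi s a * Q s a.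

End Defs.

(* Main.v *)
Require Import Defs.
From HB Require Import structures.
From mathcomp Require Import all_boot all_order all_algebra.
From mathcomp Require Import boolp classical_sets reals.
From mathcomp Require Import all_fingroup.
From mathcomp Require Import ring lra.
Set Implicit Arguments. Unset Strict Implicit. Unset Printing Implicit Defensive.
Import Order.TTheory GRing.Theory Num.Theory.
Local Open Scope ring_scope.

Section A.
Variable R : realType.
Local Open Scope classical_set_scope.

Lemma sq_le_sum n (u : 'I_n -> R) i : u i ^+ 2 <= \sum_j u j ^+ 2.
Proof.
rewrite (bigD1 i) //= lerDl; apply: sumr_ge0 => j _; exact: sqr_ge0.
Qed.

Lemma abs_le1_of_sum n (u : 'I_n -> R) i : \sum_j u j ^+ 2 <= 1 -> `|u i| <= 1.
Proof.
move=> h; have := le_trans (sq_le_sum u i) h.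
rewrite ler_norml => h2; apply/andP; split; nra.
Qed.

Definition opset m n (M : 'M[R]_(m, n)) := [set x : R | exists (u : 'I_m -> R) (v : 'I_n -> R),
        \sum_i u i ^+ 2 <= 1 /\ \sum_j v j ^+ 2 <= 1 /\
        x = \sum_i \sum_j u i * M i j * v j].

Lemma opset_ub m n (M : 'M[R]_(m, n)) : ubound (opset M) (\sum_i \sum_j `|M i j|).
Proof.
move=> x [u [v [hu [hv ->]]]].
apply: (le_trans (ler_norm _)).
apply: (le_trans (ler_norm_sum _ _ _)); apply: ler_sum => i _.
apply: (le_trans (ler_norm_sum _ _ _)); apply: ler_sum => j _.
rewrite !normrM.
have hu' := abs_le1_of_sum i hu; have hv' := abs_le1_of_sum j hv.
have h1 := normr_ge0 (u i); have h2 := normr_ge0 (v j); have h3 := normr_ge0 (M i j).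
have e1 : `|u i| * `|M i j| <= `|M i j| by rewrite -[leRHS]mul1r; apply: ler_wpM2r.
apply: le_trans e1; rewrite -[leRHS]mulr1; apply: ler_wpM2l => //; exact: mulr_ge0.
Qed.

Lemma opset0 m n (M : 'M[R]_(m, n)) : opset M 0.
Proof.
exists (fun _ => 0), (fun _ => 0).
have z : \sum_(i < m) (0:R) ^+ 2 = 0 by rewrite big1 // => *; rewrite expr0n.
have z' : \sum_(i < n) (0:R) ^+ 2 = 0 by rewrite big1 // => *; rewrite expr0n.
rewrite z z' ler01; split => //; split => //.
by rewrite big1 // => i _; rewrite big1 // => j _; rewrite !mul0r.
Qed.

Lemma opnorm_ge0 m n (M : 'M[R]_(m, n)) : 0 <= opnorm M.
Proof.
apply: (sup_upper_bound (E := opset M)); last exact: opset0.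
split; first by exists 0; exact: opset0.
by exists (\sum_i \sum_j `|M i j|); exact: opset_ub.
Qed.


Definition bil m n (M : 'M[R]_(m, n)) (u : 'I_m -> R) (v : 'I_n -> R) :=
  \sum_i \sum_j u i * M i j * v j.

Lemma bilZl m n (M : 'M[R]_(m, n)) c u v :
  bil M (fun i => c * u i) v = c * bil M u v.
Proof.
rewrite /bil mulr_sumr; apply: eq_bigr => i _; rewrite mulr_sumr.
by apply: eq_bigr => j _; rewrite !mulrA.
Qed.

Lemma bilZr m n (M : 'M[R]_(m, n)) c u v :
  bil M u (fun j => c * v j) = c * bil M u v.
Proof.
rewrite /bil mulr_sumr; apply: eq_bigr => i _; rewrite mulr_sumr.
by apply: eq_bigr => j _; rewrite mulrCA !mulrA.
Qed.

Lemma opset_has_sup m n (M : 'M[R]_(m, n)) : has_sup (opset M).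
Proof.
split; first by exists 0; exact: opset0.
by exists (\sum_i \sum_j `|M i j|); exact: opset_ub.
Qed.

Lemma sumsq_eq0 n (u : 'I_n -> R) : \sum_j u j ^+ 2 = 0 -> forall j, u j = 0.
Proof.
move=> h j; apply/eqP; rewrite -sqrf_eq0; apply/eqP.
by move/psumr_eq0P: h => ->// i _; exact: sqr_ge0.
Qed.

Lemma bil_le m n (M : 'M[R]_(m, n)) u v :
  `|bil M u v| <= opnorm M * Num.sqrt (\sum_i u i ^+ 2) * Num.sqrt (\sum_j v j ^+ 2).
Proof.
set a := Num.sqrt _; set b := Num.sqrt _.
have a0 : 0 <= a by exact: sqrtr_ge0.
have b0 : 0 <= b by exact: sqrtr_ge0.
have ge0 : 0 <= opnorm M * a * b by rewrite !mulr_ge0 // opnorm_ge0.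
have [az|anz] := eqVneq a 0.
  have hu : forall i, u i = 0.
    by apply: sumsq_eq0; move: az; rewrite /a => /eqP; rewrite sqrtr_eq0 => h;
       apply/eqP; rewrite eq_le h sumr_ge0 // => *; exact: sqr_ge0.
  by rewrite /bil big1 ?normr0 // => i _; rewrite big1 // => j _; rewrite hu !mul0r.
have [bz|bnz] := eqVneq b 0.
  have hv : forall j, v j = 0.
    by apply: sumsq_eq0; move: bz; rewrite /b => /eqP; rewrite sqrtr_eq0 => h;
       apply/eqP; rewrite eq_le h sumr_ge0 // => *; exact: sqr_ge0.
  by rewrite /bil big1 ?normr0 // => i _; rewrite big1 // => j _; rewrite hv !mulr0.
have ap : 0 < a by rewrite lt_def anz.
have bp : 0 < b by rewrite lt_def bnz.
have hsu : \sum_i (a^-1 * u i) ^+ 2 <= 1.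
  rewrite (eq_bigr (fun i => a^-2 * u i ^+ 2)); last by move=> i _; rewrite exprMn exprVn.
  rewrite -mulr_sumr -[X in _ * X](@sqr_sqrtr _ (\sum_i u i ^+ 2)) -/a; last first.
    by apply: sumr_ge0 => *; exact: sqr_ge0.
  by rewrite mulVf // expf_neq0.
have hsv : \sum_j (b^-1 * v j) ^+ 2 <= 1.
  rewrite (eq_bigr (fun i => b^-2 * v i ^+ 2)); last by move=> i _; rewrite exprMn exprVn.
  rewrite -mulr_sumr -[X in _ * X](@sqr_sqrtr _ (\sum_j v j ^+ 2)) -/b; last first.
    by apply: sumr_ge0 => *; exact: sqr_ge0.
  by rewrite mulVf // expf_neq0.
have hsu' : \sum_i ((- a^-1) * u i) ^+ 2 <= 1.
  by under eq_bigr do rewrite mulNr sqrrN.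
have e1 : bil M (fun i => a^-1 * u i) (fun j => b^-1 * v j) <= opnorm M.
  apply: (sup_upper_bound (opset_has_sup M)).
  by exists (fun i => a^-1 * u i), (fun j => b^-1 * v j).
have e2 : bil M (fun i => (- a^-1) * u i) (fun j => b^-1 * v j) <= opnorm M.
  apply: (sup_upper_bound (opset_has_sup M)).
  by exists (fun i => (- a^-1) * u i), (fun j => b^-1 * v j).
move: e1 e2; rewrite !bilZl !bilZr => e1 e2.
have hx : bil M u v = a * b * (a^-1 * (b^-1 * bil M u v)).
  by field; rewrite anz bnz.
move: e1 e2; rewrite mulNr; set y := a^-1 * _ => e1 e2; rewrite hx.
have ab : 0 < a * b by exact: mulr_gt0.
rewrite normrM (gtr0_norm ab) -mulrA [_ * (a * b)]mulrC.
apply: ler_wpM2l; first exact: ltW.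
by rewrite ler_norml; apply/andP; split; [rewrite lerNl|].
Qed.


Lemma CS n (a b : 'I_n -> R) :
  \sum_l a l * b l <= Num.sqrt (\sum_l a l ^+ 2) * Num.sqrt (\sum_l b l ^+ 2).
Proof.
have h : (\sum_l a l * b l) ^+ 2 <= (\sum_l a l ^+ 2) * (\sum_l b l ^+ 2).
  have e1 : (\sum_l a l * b l) ^+ 2 = \sum_l \sum_m (a l * b l) * (a m * b m).
    by rewrite expr2 mulr_suml; apply: eq_bigr => l _; rewrite mulr_sumr.
  have e2 : (\sum_l a l ^+ 2) * (\sum_l b l ^+ 2) = \sum_l \sum_m (a l ^+ 2 * b m ^+ 2).
    by rewrite mulr_suml; apply: eq_bigr => l _; rewrite mulr_sumr.
  have e3 : (\sum_l a l ^+ 2) * (\sum_l b l ^+ 2) = \sum_l \sum_m (a m ^+ 2 * b l ^+ 2).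
    by rewrite e2 exchange_big.
  have key : \sum_l \sum_m (2 * ((a l * b l) * (a m * b m))) <=
      \sum_l \sum_m (a l ^+ 2 * b m ^+ 2 + a m ^+ 2 * b l ^+ 2).
    apply: ler_sum => l _; apply: ler_sum => m _.
    have e : a l ^+ 2 * b m ^+ 2 + a m ^+ 2 * b l ^+ 2 - 2 * (a l * b l * (a m * b m))
      = (a l * b m - a m * b l) ^+ 2 by ring.
    by rewrite -subr_ge0 e; exact: sqr_ge0.
  have k1 : \sum_l \sum_m (2 * ((a l * b l) * (a m * b m))) = 2 * (\sum_l a l * b l) ^+ 2.
    by rewrite e1 mulr_sumr; apply: eq_bigr => l _; rewrite mulr_sumr.
  have k2 : \sum_l \sum_m (a l ^+ 2 * b m ^+ 2 + a m ^+ 2 * b l ^+ 2) =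
     (\sum_l a l ^+ 2) * (\sum_l b l ^+ 2) + (\sum_l a l ^+ 2) * (\sum_l b l ^+ 2).
    rewrite {1}e2 e3 -big_split /=; apply: eq_bigr => l _; by rewrite -big_split.
  move: key; rewrite k1 k2; lra.
rewrite -sqrtrM; last by apply: sumr_ge0 => *; exact: sqr_ge0.
apply: le_trans (ler_norm _) _.
by rewrite -sqrtr_sqr ler_sqrt // mulr_ge0 // sumr_ge0 // => *; exact: sqr_ge0.
Qed.


Lemma row_le_n2i m k (U : 'M[R]_(m, k)) i : row_norm2 U i <= norm_2inf U.
Proof. rewrite /norm_2inf; exact: le_bigmax. Qed.

Lemma n2i_ge0 m k (U : 'M[R]_(m, k)) : 0 <= norm_2inf U.
Proof. rewrite /norm_2inf; exact: bigmax_ge_id. Qed.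

Lemma colsum_bound m k (U : 'M[R]_(m, k)) :
  Num.sqrt (\sum_l Num.sqrt (\sum_i U i l ^+ 2) ^+ 2) <= Num.sqrt m%:R * norm_2inf U.
Proof.
have N0 := n2i_ge0 U.
rewrite -[norm_2inf U]ger0_norm // -sqrtr_sqr -sqrtrM ?ler0n // ler_sqrt; last first.
  by rewrite mulr_ge0 ?ler0n ?sqr_ge0.
rewrite (eq_bigr (fun l => \sum_i U i l ^+ 2)); last first.
  by move=> l _; rewrite sqr_sqrtr // sumr_ge0 // => *; exact: sqr_ge0.
rewrite exchange_big /=.
have -> : m%:R * norm_2inf U ^+ 2 = \sum_(i < m) norm_2inf U ^+ 2.
  by rewrite sumr_const card_ord mulr_natl.
apply: ler_sum => i _.
have h1 := row_le_n2i U i.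
have h2 : 0 <= row_norm2 U i by exact: sqrtr_ge0.
have -> : \sum_l U i l ^+ 2 = row_norm2 U i ^+ 2.
  by rewrite sqr_sqrtr // sumr_ge0 // => *; exact: sqr_ge0.
nra.
Qed.

Lemma fact_bound m n k (X : 'M[R]_(m, n)) (U : 'M[R]_(m, k)) (V : 'M[R]_(n, k)) :
  `|\sum_i \sum_j X i j * (U *m V^T) i j| <=
    opnorm X * (Num.sqrt m%:R * norm_2inf U) * (Num.sqrt n%:R * norm_2inf V).
Proof.
have E : \sum_i \sum_j X i j * (U *m V^T) i j =
    \sum_l bil X (fun i => U i l) (fun j => V j l).
  rewrite /bil [RHS]exchange_big; apply: eq_bigr => i _.
  rewrite [RHS]exchange_big; apply: eq_bigr => j _.
  rewrite !mxE mulr_sumr; apply: eq_bigr => l _; rewrite mxE; ring.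
rewrite E; apply: le_trans (ler_norm_sum _ _ _) _.
apply: le_trans.
  apply: ler_sum => l _; exact: (bil_le X (fun i => U i l) (fun j => V j l)).
under eq_bigr do rewrite -mulrA.
rewrite -mulr_sumr -mulrA; apply: ler_wpM2l; first exact: opnorm_ge0.
apply: le_trans (CS _ _) _.
apply: ler_pM; try exact: sqrtr_ge0; exact: colsum_bound.
Qed.

End A.

Section D.
Variable R : realType.
Local Open Scope classical_set_scope.

Lemma det_rank1 n (a b : 'rV[R]_n) :
  \det (1%:M + a^T *m b) = 1 + (b *m a^T) 0 0.
Proof.
pose L1 := block_mx (1%:M : 'M[R]_1) 0 a^T (1%:M : 'M[R]_n).
pose U1 := block_mx (1%:M : 'M[R]_1) (- b) 0 (1%:M + a^T *m b).
pose U2 := block_mx (1%:M + b *m a^T : 'M[R]_1) (- b) 0 (1%:M : 'M[R]_n).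
have e1 : L1 *m U1 = U2 *m L1.
  rewrite /L1 /U1 /U2 !mulmx_block.
  rewrite !mulmx0 !mul0mx !mul1mx !mulmx1 !addr0 !add0r.
  by rewrite mulmxN mulNmx addrK (addrC 1%:M) addKr.
have := congr1 determinant e1.
rewrite !det_mulmx /L1 /U1 /U2 det_lblock !det_ublock !det1 !mul1r !mulr1.
by move=> ->; rewrite det_mx11 !mxE eqxx.
Qed.


Lemma detN n (w : 'rV[R]_n) p q : p != 0 ->
  \det (p%:M + q *: (w^T *m w)) = p ^+ n * (1 + q / p * \sum_l w 0 l ^+ 2).
Proof.
move=> p0.
have -> : p%:M + q *: (w^T *m w) = p *: (1%:M + ((q / p) *: w)^T *m w).
  apply/matrixP => i j; rewrite !mxE !big_ord1 !mxE.
  by case: (i == j) => /=; field.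
rewrite detZ det_rank1 !mxE; congr (_ * (1 + _)).
rewrite mulr_sumr; apply: eq_bigr => l _; rewrite !mxE; ring.
Qed.


Lemma det_le_fact n (M : 'M[R]_n) : (forall i j, `|M i j| <= 1) -> `|\det M| <= n`!%:R.
Proof.
move=> hM; rewrite /determinant.
apply: le_trans (ler_norm_sum _ _ _) _.
have -> : n`!%:R = \sum_(s : 'S_n) (1 : R) by rewrite sumr_const card_Sn.
apply: ler_sum => s _.
rewrite normrM normrX normrN normr1 expr1n mul1r normr_prod.
apply: prodr_ile1 => i _; rewrite normr_ge0; exact: hM.
Qed.


Lemma bernoulli (x : R) n : 0 <= x <= 1 -> 1 - n%:R * x <= (1 - x) ^+ n.
Proof.
move=> /andP[x0 x1]; elim: n => [|n IH]; first by rewrite mul0r subr0 expr0.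
rewrite exprS -natr1 mulrDl mul1r.
have h : 0 <= 1 - x by lra.
have : (1 - x) * (1 - n%:R * x) <= (1 - x) * (1 - x) ^+ n by exact: ler_wpM2l.
have hn : 0 <= n%:R :> R by exact: ler0n.
nra.
Qed.

Lemma growth (K : nat) (W p0 q0 : R) : (1 <= K)%N -> 0 < W ->
  p0 = 1 - (8 * K%:R)^-1 -> q0 = (5 * W)^-1 ->
  21/20 <= p0 ^+ K * (1 + q0 / p0 * W).
Proof.
move=> K1 W0 -> ->; set p := 1 - _; set q := (5 * W)^-1.
have Kp : 1 <= K%:R :> R by rewrite ler1n.
set t := (K%:R : R)^-1.
have t0 : 0 < t by rewrite invr_gt0; lra.
have t1 : t <= 1 by rewrite invf_le1; lra.
have Kt : K%:R * t = 1 by rewrite mulfV //; apply/eqP => h; lra.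
have pE : p = 1 - t / 8 by rewrite /p invfM mulrC.
have pp : 0 < p by rewrite pE; lra.
have e : p ^+ K * (1 + q / p * W) = p ^+ K.-1 * (p + 1/5).
  rewrite -{1}(prednK K1) exprS /q; field.
  by apply/andP; split; apply/eqP => h; lra.
rewrite e.
have b := @bernoulli (t/8) K.-1.
have hK : (K.-1)%:R * t = 1 - t.
  by move: Kt; rewrite -{1}(prednK K1) -natr1 mulrDl mul1r; lra.
have : 1 - (K.-1)%:R * (t / 8) <= p ^+ K.-1 by rewrite pE; apply: b; apply/andP; split; lra.
rewrite mulrA hK => h.
have h2 : 0 <= 6/5 - t/8 by lra.
have : (1 - (1 - t) / 8) * (6/5 - t/8) <= p ^+ K.-1 * (6/5 - t/8) by exact: ler_wpM2r.
have -> : p + 1/5 = 6/5 - t/8 by rewrite pE; field.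
nra.
Qed.


Lemma feas_ineq (K : nat) (W p q Z c : R) : (1 <= K)%N -> 2 * K%:R <= W ->
  p = 1 - (8 * K%:R)^-1 -> q = (5 * W)^-1 -> 0 <= Z <= 1 -> c ^+ 2 <= 1 ->
  p ^+ 2 * Z + 2 * p * q * c ^+ 2 + q ^+ 2 * c ^+ 2 * W <= 1.
Proof.
move=> K1 KW -> -> /andP[Z0 Z1] c1.
have Kp : 1 <= K%:R :> R by rewrite ler1n.
set t := (K%:R : R)^-1.
have t0 : 0 < t by rewrite invr_gt0; lra.
have t1 : t <= 1 by rewrite invf_le1; lra.
have Kt : K%:R * t = 1 by rewrite mulfV //; apply/eqP => h; lra.
have W0 : 0 < W by lra.
set u := W^-1.
have u0 : 0 < u by rewrite invr_gt0.
have Wu : W * u = 1 by rewrite mulfV //; apply/eqP => h; lra.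
have ut : u <= t / 2.
  have h : 0 <= (W - 2 * K%:R) * (u * t).
    by apply: mulr_ge0; [rewrite subr_ge0 | apply: ltW; exact: mulr_gt0].
  have e : (W - 2 * K%:R) * (u * t) = t - 2 * u.
    have -> : (W - 2 * K%:R) * (u * t) = (W * u) * t - 2 * (K%:R * t) * u by ring.
    by rewrite Wu Kt; ring.
  lra.
have hq : (5 * W)^-1 = u / 5 by rewrite invfM mulrC.
have hqW : (u / 5) ^+ 2 * c ^+ 2 * W = c ^+ 2 * u / 25.
  have -> : (u / 5) ^+ 2 * c ^+ 2 * W = c ^+ 2 * u * (W * u) / 25 by field.
  by rewrite Wu mulr1.
have hp : 1 - (8 * K%:R)^-1 = 1 - t / 8 by rewrite invfM mulrC.
rewrite hq hp hqW.
set A := (1 - t / 8) ^+ 2.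
have A0 : 0 <= A by exact: sqr_ge0.
have AZ : A * Z <= A by rewrite -[leRHS]mulr1; exact: ler_wpM2l.
set B := 2 * (1 - t / 8) * (u / 5) + u / 25.
have B0 : 0 <= B by rewrite /B; nra.
have c0 : 0 <= c ^+ 2 by exact: sqr_ge0.
have Bc : B * c ^+ 2 <= B by rewrite -[leRHS]mulr1; exact: ler_wpM2l.
have -> : A * Z + 2 * (1 - t / 8) * (u / 5) * c ^+ 2 + c ^+ 2 * u / 25 = A * Z + B * c ^+ 2.
  by rewrite /B; ring.
have tt : t * t <= t by nra.
have tu : 0 <= t * u by nra.
have : A + B <= 1 by rewrite /A /B; nra.
lra.
Qed.


Definition rn2 m n (M : 'M[R]_(m, n)) i := \sum_j M i j ^+ 2.

Lemma rn2_ge0 m n (M : 'M[R]_(m, n)) i : 0 <= rn2 M i.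
Proof. by apply: sumr_ge0 => *; exact: sqr_ge0. Qed.

Lemma step n S A (X : 'M[R]_(S, n)) (Y : 'M[R]_(A, n)) (d : R) (H : 'M[R]_n) :
  (1 <= n)%N -> (forall i j, `|(X *m Y^T) i j| <= 1) -> 2 * n%:R <= d ->
  H \in unitmx -> (forall j, rn2 (Y *m H) j <= 1) ->
  forall i, d < rn2 (X *m (invmx H)^T) i ->
  exists H', [/\ H' \in unitmx, (forall j, rn2 (Y *m H') j <= 1) &
                 21/20 * `|\det H| <= `|\det H'|].
Proof.
move=> n1 hXY hd Hu HY i hi.
set T := X *m (invmx H)^T in hi *.
pose w : 'rV[R]_n := row i T.
set W := rn2 T i in hi *.
have hW : W = \sum_l w 0 l ^+ 2.
  rewrite /W /rn2 /w; apply: eq_bigr => l _. by rewrite !mxE.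
have W0 : 0 < W.
  have : 0 < n%:R :> R by rewrite ltr0n.
  lra.
pose p : R := 1 - (8 * n%:R)^-1.
pose q : R := (5 * W)^-1.
have np : 1 <= n%:R :> R by rewrite ler1n.
have p0 : 0 < p.
  rewrite /p subr_gt0 invf_lt1; lra.
pose N := p%:M + q *: (w^T *m w).
have dN : \det N = p ^+ n * (1 + q / p * W).
  by rewrite /N detN ?hW // gt_eqF.
have gN : 21/20 <= \det N by rewrite dN; exact: growth.
exists (H *m N); split.
- rewrite unitmxE det_mulmx unitfE mulf_neq0 //.
    by rewrite -unitfE -unitmxE.
  by apply/eqP => h; move: gN; rewrite h; lra.
- move=> j.
  set Z := Y *m H.
  set c := \sum_m Z j m * w 0 m.
  have hc : c = (X *m Y^T) i j.
    have -> : c = (Z *m T^T) j i.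
      by rewrite mxE; apply: eq_bigr => m _; rewrite !mxE.
    rewrite /Z /T trmx_mul trmxK -mulmxA (mulmxA H) mulmxV // mul1mx.
    by rewrite -[Y]trmxK -trmx_mul mxE trmxK.
  have hZN : forall l, (Y *m (H *m N)) j l = p * Z j l + q * c * w 0 l.
    move=> l; rewrite mulmxA -/Z /N mulmxDr mul_mx_scalar -scalemxAr mulmxA.
    rewrite !mxE big_ord1 !mxE -mulrA; congr (_ + q * (_ * _)).
    by apply: eq_bigr => m _; rewrite !mxE.
  have e : rn2 (Y *m (H *m N)) j =
      p ^+ 2 * rn2 Z j + 2 * p * q * c ^+ 2 + q ^+ 2 * c ^+ 2 * W.
    rewrite /rn2 (eq_bigr (fun l => p ^+ 2 * Z j l ^+ 2 + (2 * p * q * c) * (Z j l * w 0 l)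
                               + (q ^+ 2 * c ^+ 2) * w 0 l ^+ 2)); last first.
      by move=> l _; rewrite hZN; ring.
    rewrite !big_split /= -!mulr_sumr -/c hW; ring.
  rewrite e; apply: (feas_ineq (K := n)) => //.
  + exact: le_trans (ltW hi).
  + by rewrite rn2_ge0 HY.
  + rewrite hc; have := hXY i j; rewrite ler_norml => /andP[h1 h2].
    have h3 : 0 <= (1 - (X *m Y^T) i j) * (1 + (X *m Y^T) i j) by apply: mulr_ge0; lra.
    nra.
- have dN0 : 0 <= \det N by lra.
  rewrite det_mulmx normrM (ger0_norm dN0) mulrC.
  by apply: ler_wpM2l => //; exact: normr_ge0.
Qed.


Lemma abs_le1_of_sum' n (u : 'I_n -> R) i : \sum_j u j ^+ 2 <= 1 -> `|u i| <= 1.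
Proof.
move=> h; have : u i ^+ 2 <= \sum_j u j ^+ 2.
  rewrite (bigD1 i) //= lerDl; apply: sumr_ge0 => j _; exact: sqr_ge0.
move=> h1; have h2 := le_trans h1 h.
rewrite ler_norml; apply/andP; split; nra.
Qed.

Lemma bern2 (x : R) m : 0 <= x -> 1 + m%:R * x <= (1 + x) ^+ m.
Proof.
move=> x0; elim: m => [|m IH]; first by rewrite mul0r addr0 expr0.
rewrite exprS -natr1 mulrDl mul1r.
have h : 0 <= 1 + x by lra.
have : (1 + x) * (1 + m%:R * x) <= (1 + x) * (1 + x) ^+ m by exact: ler_wpM2l.
have hn : 0 <= m%:R :> R by exact: ler0n.
nra.
Qed.

End D.

Section D.
Variable R : realType.
Local Open Scope classical_set_scope.
Lemma archi_contra (B : R) : (forall m : nat, (21/20) ^+ m <= B) -> False.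
Proof.
move=> hB.
have B0 : 0 <= 20 * B by have := hB 0%N; rewrite expr0 => h; lra.
have hM := archi_boundP B0.
have h0 : 0 <= 1 / 20 :> R by lra.
have h1 := bern2 (Num.bound (20 * B)) h0.
have e : 1 + 1/20 = 21/20 :> R by field.
rewrite e in h1.
have h2 := hB (Num.bound (20 * B)).
move: hM h1 h2; set M := (Num.bound (20 * B))%:R.
lra.
Qed.

Lemma john n S A (X : 'M[R]_(S, n)) (Y : 'M[R]_(A, n)) (f : 'I_n -> 'I_A) (d : R) :
  (1 <= n)%N -> rowsub f Y \in unitmx -> (forall i j, `|(X *m Y^T) i j| <= 1) ->
  2 * n%:R <= d ->
  exists H : 'M[R]_n, [/\ H \in unitmx, (forall j, rn2 (Y *m H) j <= 1) &
     (forall i, rn2 (X *m (invmx H)^T) i <= d)].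
Proof.
move=> n1 Bu hXY hd.
have [//|nex] := pselect (exists H : 'M[R]_n, [/\ H \in unitmx, (forall j, rn2 (Y *m H) j <= 1) &
     (forall i, rn2 (X *m (invmx H)^T) i <= d)]).
exfalso.
have viol : forall H : 'M[R]_n, H \in unitmx -> (forall j, rn2 (Y *m H) j <= 1) ->
    exists i, d < rn2 (X *m (invmx H)^T) i.
  move=> H Hu HY; apply: contrapT => ni; apply: nex; exists H; split => // i.
  by rewrite leNgt; apply/negP => hi; apply: ni; exists i.
set s := \sum_j rn2 Y j.
have s0 : 0 <= s by apply: sumr_ge0 => j _; exact: rn2_ge0.
pose c := (1 + s)^-1.
have c0 : 0 < c by rewrite invr_gt0; lra.
have cs : c * (1 + s) = 1 by rewrite mulVf //; apply/eqP => h; lra.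
have H0u : c%:M \in (unitmx : {pred 'M[R]_n}).
  by rewrite unitmxE det_scalar unitfE expf_neq0 // gt_eqF.
have H0Y : forall j, rn2 (Y *m c%:M) j <= 1.
  move=> j; rewrite mul_mx_scalar.
  have -> : rn2 (c *: Y) j = c ^+ 2 * rn2 Y j.
    by rewrite /rn2 mulr_sumr; apply: eq_bigr => l _; rewrite mxE exprMn.
  have hj : rn2 Y j <= s.
    rewrite /s (bigD1 j) //= lerDl; apply: sumr_ge0 => *; exact: rn2_ge0.
  have hj0 := rn2_ge0 Y j.
  nra.
have claim : forall m : nat, exists H : 'M[R]_n, [/\ H \in unitmx,
    (forall j, rn2 (Y *m H) j <= 1) & (21/20) ^+ m * c ^+ n <= `|\det H|].
  elim => [|m [H [Hu HY Hd]]].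
    exists c%:M; split => //; rewrite expr0 mul1r det_scalar ger0_norm //.
    by apply: exprn_ge0; exact: ltW.
  have [i hi] := viol H Hu HY.
  have [H' [H'u H'Y H'd]] := step n1 hXY hd Hu HY hi.
  exists H'; split => //; rewrite exprS -mulrA; apply: le_trans H'd.
  by apply: ler_wpM2l => //; lra.
set D := `|\det (rowsub f Y)|.
have D0 : 0 < D by rewrite normr_gt0 -unitfE -unitmxE.
have bnd : forall H : 'M[R]_n, (forall j, rn2 (Y *m H) j <= 1) -> D * `|\det H| <= n`!%:R.
  move=> H HY; rewrite /D -normrM -det_mulmx mul_rowsub_mx; apply: det_le_fact => l m.
  by rewrite mxE; apply: (abs_le1_of_sum' (u := fun m => (Y *m H) (f l) m)); exact: HY.
have cn : 0 < c ^+ n by exact: exprn_gt0.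
pose Bd := n`!%:R / (D * c ^+ n).
have hB : forall m : nat, (21/20) ^+ m <= Bd.
  move=> m; have [H [_ HY Hd]] := claim m.
  rewrite /Bd ler_pdivlMr ?mulr_gt0 //.
  have := bnd H HY.
  have : D * ((21/20) ^+ m * c ^+ n) <= D * `|\det H| by apply: ler_wpM2l => //; exact: ltW.
  move=> h1 h2; apply: le_trans h2; apply: le_trans h1; rewrite le_eqVlt; apply/orP; left.
  by apply/eqP; ring.
exact: archi_contra hB.
Qed.

End D.

Section F.
Variable R : realType.
Local Open Scope classical_set_scope.

Definition mset m n (M : 'M[R]_(m, n)) :=
  [set x : R | exists (k : nat) (U : 'M[R]_(m, k)) (V : 'M[R]_(n, k)),
        M = U *m V^T /\ x = norm_2inf U * norm_2inf V].

Lemma mset_lb m n (M : 'M[R]_(m, n)) : lbound (mset M) 0.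
Proof.
by move=> x [k [U [V [_ ->]]]]; apply: mulr_ge0; exact: n2i_ge0.
Qed.

Lemma maxnorm_le m n (M : 'M[R]_(m, n)) k (U : 'M[R]_(m, k)) (V : 'M[R]_(n, k)) :
  M = U *m V^T -> maxnorm M <= norm_2inf U * norm_2inf V.
Proof.
move=> e; apply: (ge_inf (E := mset M)); first by exists 0; exact: mset_lb.
by exists k, U, V.
Qed.

Lemma maxnorm_ge0 m n (M : 'M[R]_(m, n)) : 0 <= maxnorm M.
Proof.
apply: (lb_le_inf (E := mset M)); last exact: mset_lb.
exists (norm_2inf M * norm_2inf (1%:M : 'M[R]_n)), n, M, 1%:M; split => //.
by rewrite trmx1 mulmx1.
Qed.

Lemma n2i_le m n (M : 'M[R]_(m, n)) (b : R) : 0 <= b ->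
  (forall i, rn2 M i <= b) -> norm_2inf M <= Num.sqrt b.
Proof.
move=> b0 h; rewrite /norm_2inf; apply: bigmax_le; first exact: sqrtr_ge0.
by move=> i _; rewrite /row_norm2 ler_sqrt //; exact: h.
Qed.

Lemma maxnorm_rank (S A d : nat) (r : 'M[R]_(S, A)) :
  (forall i j, `|r i j| <= 1) -> (\rank r <= d./2)%N -> maxnorm r <= Num.sqrt d%:R.
Proof.
move=> hr hk.
have [k0|kpos] := eqVneq (\rank r) 0%N.
  have r0 : r = 0 by apply/eqP; rewrite -mxrank_eq0 k0.
  apply: le_trans (maxnorm_le (U := (0 : 'M[R]_(S, 0))) (V := (0 : 'M[R]_(A, 0))) _) _.
    by rewrite r0 mul0mx.
  have -> : norm_2inf (0 : 'M[R]_(S, 0)) = 0.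
    apply/eqP; rewrite eq_le n2i_ge0 andbT.
    have := @n2i_le _ _ (0 : 'M[R]_(S, 0)) 0 (lexx 0).
    rewrite sqrtr0; apply => i; by rewrite /rn2 big_ord0.
  by rewrite mul0r sqrtr_ge0.
set k := \rank r in kpos hk *.
have k1 : (1 <= k)%N by rewrite lt0n.
pose X := col_base r.
pose Y := (row_base r)^T.
have rXY : r = X *m Y^T by rewrite /Y trmxK mulmx_base.
have Yfull : row_full Y by rewrite /row_full mxrank_tr; exact: row_base_free.
have Bu := fullrowsub_unit Yfull.
have hd : 2 * k%:R <= d%:R :> R.
  rewrite -natrM ler_nat mul2n.
  have h1 : (k.*2 <= d./2.*2)%N by rewrite leq_double.
  apply: leq_trans h1 _; rewrite -{2}(odd_double_half d); exact: leq_addl.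
have hXY : forall i j, `|(X *m Y^T) i j| <= 1 by move=> i j; rewrite -rXY.
have [H [Hu HY HX]] := john k1 Bu hXY hd.
apply: le_trans (maxnorm_le (U := X *m (invmx H)^T) (V := Y *m H) _) _.
  apply: (etrans rXY).
  have e : (invmx H)^T *m H^T = 1%:M by rewrite -trmx_mul mulmxV // trmx1.
  by rewrite [in RHS]trmx_mul -[in RHS]mulmxA [in RHS](mulmxA _ H^T) e mul1mx.
rewrite -[leRHS]mulr1; apply: ler_pM; try exact: n2i_ge0.
  by apply: n2i_le => //; exact: ler0n.
by rewrite -sqrtr1; apply: n2i_le => //; exact: ler01.
Qed.


Definition ip m n (X M : 'M[R]_(m, n)) := \sum_i \sum_j X i j * M i j.

Lemma ip_bound m n (X M : 'M[R]_(m, n)) :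
  `|ip X M| <= opnorm X * (Num.sqrt m%:R * Num.sqrt n%:R) * maxnorm M.
Proof.
set C := opnorm X * _.
have C0 : 0 <= C by rewrite /C !mulr_ge0 ?opnorm_ge0 ?sqrtr_ge0.
have key : forall k (U : 'M[R]_(m, k)) (V : 'M[R]_(n, k)), M = U *m V^T ->
    `|ip X M| <= C * (norm_2inf U * norm_2inf V).
  move=> k U V e; rewrite /ip e; apply: le_trans (fact_bound X U V) _.
  by rewrite /C le_eqVlt; apply/orP; left; apply/eqP; ring.
have [Cz|Cnz] := eqVneq C 0.
  have := key n M 1%:M; rewrite trmx1 mulmx1 => /(_ erefl).
  by rewrite Cz !mul0r.
have Cp : 0 < C by rewrite lt_def Cnz C0.
rewrite mulrC -ler_pdivrMr //.
apply: (lb_le_inf (E := mset M)).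
  exists (norm_2inf M * norm_2inf (1%:M : 'M[R]_n)), n, M, 1%:M; split => //.
  by rewrite trmx1 mulmx1.
move=> x [k [U [V [e ->]]]].
by rewrite ler_pdivrMr // mulrC; exact: key.
Qed.

Lemma ipBl m n (X Y M : 'M[R]_(m, n)) : ip (X - Y) M = ip X M - ip Y M.
Proof.
rewrite /ip -sumrB; apply: eq_bigr => i _; rewrite -sumrB; apply: eq_bigr => j _.
by rewrite !mxE mulrBl.
Qed.

End F.

Unset Implicit Arguments.
Set Strict Implicit.

Theorem corollary3 (R : realType) (S A d : nat)
  (mu : 'I_S -> R) (piT piB : 'I_S -> 'I_A -> R) (r : 'M[R]_(S, A))
  (Qhat : 'M[R]_(S, A)) :
  (forall s, 0 <= mu s) -> \sum_s mu s = 1 ->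
  (forall s a, 0 <= piT s a) -> (forall s, \sum_a piT s a = 1) ->
  (forall s a, 0 <= piB s a) -> (forall s, \sum_a piB s a = 1) ->
  (forall s a, 0 <= r s a <= 1) ->
  (\rank r <= d./2)%N ->
  (* Qhat is feasible *)
  hadamard (supp_ind (occ mu piB)) Qhat = hadamard (supp_ind (occ mu piB)) r ->
  supnorm Qhat <= 1 ->
  (* Qhat minimizes the max norm among feasible matrices *)
  (forall M : 'M[R]_(S, A),
     hadamard (supp_ind (occ mu piB)) M = hadamard (supp_ind (occ mu piB)) r ->
     supnorm M <= 1 -> maxnorm Qhat <= maxnorm M) ->
  `| value mu piT Qhat - value mu piT r | <=
    2 * Num.sqrt ((d * S * A)%:R) * Dis (occ mu piB) (occ mu piT).
Proof.
move=> mu0 mu1 pT0 pT1 pB0 pB1 r01 rk feas _ opt.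
set p := occ mu piB; set q := occ mu piT.
have hr1 : forall i j, `|r i j| <= 1.
  by move=> i j; have /andP[h1 h2] := r01 i j; rewrite ger0_norm.
have mr := maxnorm_rank hr1 rk.
have mQ : maxnorm Qhat <= maxnorm r.
  apply: opt => //; rewrite /supnorm; apply: bigmax_le => // i _.
  by apply: bigmax_le => // j _.
have vE : forall Q, value mu piT Q = ip q Q.
  by move=> Q; rewrite /value /ip; apply: eq_bigr => i _; apply: eq_bigr => j _; rewrite mxE.
set K := 2 * Num.sqrt (d * S * A)%:R.
have K0 : 0 <= K by rewrite mulr_ge0 ?sqrtr_ge0.
have KE : K = 2 * Num.sqrt d%:R * (Num.sqrt S%:R * Num.sqrt A%:R).
  by rewrite /K !natrM !sqrtrM ?mulr_ge0 ?ler0n // !mulrA.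
have hg : forall g : 'M[R]_(S, A), is_distr g -> (forall i j, p i j = 0 -> g i j = 0) ->
    `|value mu piT Qhat - value mu piT r| <= K * opnorm (g - q).
  move=> g _ gs.
  have eg : ip g Qhat = ip g r.
    rewrite /ip; apply: eq_bigr => i _; apply: eq_bigr => j _.
    have [pz|pnz] := eqVneq (p i j) 0; first by rewrite gs // !mul0r.
    have := congr1 (fun M : 'M[R]_(S, A) => M i j) feas; rewrite /= !mxE.
    by move: pnz; rewrite /p mxE => -> ; rewrite !mul1r => ->.
  have e : value mu piT Qhat - value mu piT r = ip (g - q) r - ip (g - q) Qhat.
    by rewrite !vE !ipBl eg; ring.
  rewrite e; apply: le_trans (ler_normB _ _) _.
  have b1 := ip_bound (g - q) r; have b2 := ip_bound (g - q) Qhat.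
  set C := opnorm (g - q) * _ in b1 b2.
  have C0 : 0 <= C by rewrite /C !mulr_ge0 ?opnorm_ge0 ?sqrtr_ge0.
  have : C * maxnorm r <= C * Num.sqrt d%:R by exact: ler_wpM2l.
  have : C * maxnorm Qhat <= C * Num.sqrt d%:R by apply: ler_wpM2l => //; exact: le_trans mr.
  have -> : K * opnorm (g - q) = 2 * (C * Num.sqrt d%:R) by rewrite KE /C; ring.
  lra.
have pd : is_distr p.
  split; first by move=> i j; rewrite mxE mulr_ge0.
  rewrite -mu1; apply: eq_bigr => i _.
  under eq_bigr do rewrite mxE.
  by rewrite -mulr_sumr pB1 mulr1.
have [Kz|Knz] := eqVneq K 0.
  by have := hg p pd (fun _ _ h => h); rewrite Kz !mul0r.
have Kp : 0 < K by rewrite lt_def Knz K0.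
rewrite -/K mulrC -ler_pdivrMr //.
apply: lb_le_inf.
  by exists (opnorm (p - q)), p; split => //.
move=> x [g [gd [gs ->]]].
by rewrite ler_pdivrMr // mulrC; exact: hg.
Qed.
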